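(* Let $n\ge1$ be a natural number, let $a,b,\alpha,\beta,\theta$ be variables (with $\beta a-\alpha b\neq0$), and define \[ \Psi_r(n)=\Psi\left(\begin{array}{cc|c} a-\alpha\theta & b-\beta\theta & n \\ \alpha & \beta & r \end{array}\right),\qquad \Phi_r(n)=\Phi\left(\begin{array}{cc|c} a-\alpha\theta & b-\beta\theta & n \\ \alpha & \beta & r \end{array}\right), \] viewed as polynomials in $a,b,\alpha,\beta,\theta$. Then \[ \Psi_r(n)=-\frac{1}{r}\Big(-\frac{\partial}{\partial\theta}\Big)\Psi_{r-1}(n)\ \ (1\le r\le\lfloor n/2\rfloor),\qquad \Phi_r(n)=-\frac{1}{r}\Big(-\frac{\partial}{\partial\theta}\Big)\Phi_{r-1}(n)\ \ (1\le r\le\lfloor (n-1)/2\rfloor). \]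
   Context: $\delta(m)=1$ for $m$ odd, $0$ for $m$ even; $\lfloor\cdot\rfloor$ is the floor. For indeterminates $a,b,\alpha,\beta$ and $n\ge1$, $\Psi\left(\begin{array}{cc|c} a & b & n \\ \alpha & \beta & r \end{array}\right)$ ($0\le r\le\lfloor n/2\rfloor$) and $\Phi\left(\begin{array}{cc|c} a & b & n \\ \alpha & \beta & r \end{array}\right)$ ($0\le r\le\lfloor (n-1)/2\rfloor$) are the unique polynomials in $\mathbb{Z}[a,b,\alpha,\beta]$ such that, identically in $x,y$, $(\beta a-\alpha b)^{\lfloor n/2\rfloor}\frac{x^n+y^n}{(x+y)^{\delta(n)}}=\sum_{r}\Psi\left(\begin{array}{cc|c} a & b & n \\ \alpha & \beta & r \end{array}\right)(\alpha x^2+\beta xy+\alpha y^2)^{\lfloor n/2\rfloor-r}(ax^2+bxy+ay^2)^r$ and $(\beta a-\alpha b)^{\lfloor (n-1)/2\rfloor}\frac{x^n-y^n}{(x-y)(x+y)^{\delta(n-1)}}=\sum_{r}\Phi\left(\begin{array}{cc|c} a & b & n \\ \alpha & \beta & r \end{array}\right)(\alpha x^2+\beta xy+\alpha y^2)^{\lfloor (n-1)/2\rfloor-r}(ax^2+bxy+ay^2)^r$. Substituting $a-\alpha\theta$, $b-\beta\theta$ for $a$, $b$ gives polynomials in $a,b,\alpha,\beta,\theta$. *)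

(* Defs.v *)
From HB Require Import structures.
From mathcomp Require Import all_boot all_order all_algebra.
From mathcomp Require Import mpoly.
Set Implicit Arguments. Unset Strict Implicit. Unset Printing Implicit Defensive.
Import GRing.Theory.
Local Open Scope ring_scope.

Definition XV (n k : nat) (R : comNzRingType) : {mpoly R[n.+1]} :=
  'X_(@inord n k).

Definition a6 := XV 5 0 int.
Definition b6 := XV 5 1 int.
Definition al6 := XV 5 2 int.
Definition be6 := XV 5 3 int.
Definition x6 := XV 5 4 int.
Definition y6 := XV 5 5 int.

Definition emb6 (p : {mpoly int[4]}) : {mpoly int[6]} :=
  p \mPo [tuple a6; b6; al6; be6].

Definition qform (c d : {mpoly int[6]}) : {mpoly int[6]} :=
  c * x6 ^+ 2 + d * x6 * y6 + c * y6 ^+ 2.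

(* Psi(a b n | alpha beta r), r = 0..floor(n/2), are characterized by
   (beta a - alpha b)^{floor(n/2)} (x^n+y^n)/(x+y)^{delta(n)}
     = sum_r Psi_r (alpha x^2+beta xy+alpha y^2)^{floor(n/2)-r} (a x^2+bxy+ay^2)^r,
   written here with the denominator cleared (Z[...] is a domain). *)
Definition IsPsi (n : nat) (Psi : nat -> {mpoly int[4]}) : Prop :=
  (be6 * a6 - al6 * b6) ^+ (n./2) * (x6 ^+ n + y6 ^+ n)
  = (x6 + y6) ^+ (odd n) *
    \sum_(r < (n./2).+1)
       emb6 (Psi r) * qform al6 be6 ^+ (n./2 - r) * qform a6 b6 ^+ r.

(* Phi: (beta a - alpha b)^{floor((n-1)/2)} (x^n-y^n)/((x-y)(x+y)^{delta(n-1)})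
     = sum_r Phi_r (alpha x^2+...)^{floor((n-1)/2)-r} (a x^2+...)^r. *)
Definition IsPhi (n : nat) (Phi : nat -> {mpoly int[4]}) : Prop :=
  (be6 * a6 - al6 * b6) ^+ ((n.-1)./2) * (x6 ^+ n - y6 ^+ n)
  = (x6 - y6) * (x6 + y6) ^+ (odd n.-1) *
    \sum_(r < ((n.-1)./2).+1)
       emb6 (Phi r) * qform al6 be6 ^+ ((n.-1)./2 - r) * qform a6 b6 ^+ r.

Definition a5 := XV 4 0 int.
Definition b5 := XV 4 1 int.
Definition al5 := XV 4 2 int.
Definition be5 := XV 4 3 int.
Definition th5 := XV 4 4 int.
Definition theta_idx : 'I_5 := @inord 4 4.

(* substitution a -> a - alpha theta, b -> b - beta theta, viewed with
   rational coefficients (so that the factor 1/r makes sense). *)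
Definition subst_theta (p : {mpoly int[4]}) : {mpoly rat[5]} :=
  map_mpoly (fun z : int => z%:~R)
    (p \mPo [tuple a5 - al5 * th5; b5 - be5 * th5; al5; be5]).

(* Main.v *)
Require Import Defs.
From HB Require Import structures.
From mathcomp Require Import all_boot all_order all_algebra.
From mathcomp Require Import mpoly.
From mathcomp Require Import ring.
Import GRing.Theory.
Local Open Scope ring_scope.


Lemma mpoly_gen_ind n (R : comRingType) (P : {mpoly R[n]} -> Prop) :
  (forall c, P c%:MP) -> (forall i, P 'X_i) ->
  (forall p q, P p -> P q -> P (p + q)) ->
  (forall p q, P p -> P q -> P (p * q)) -> forall p, P p.
Proof.
move=> HC HX HD HM; elim/mpolyind => [|c m p _ _ Pp].
  by have := HC 0; rewrite mpolyC0.
apply: (HD _ _) => //; rewrite -mul_mpolyC; apply: (HM _ _) => //.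
rewrite mpolyXE_id; apply: (big_ind P).
- by have := HC 1; rewrite mpolyC1.
- by move=> x y; exact: HM.
move=> i _; elim: (m i) => [|k IH]; first by have := HC 1; rewrite mpolyC1 expr0.
by rewrite exprS; apply: (HM _ _).
Qed.

Lemma dX n (R : comRingType) (i j : 'I_n) :
  ('X_i : {mpoly R[n]})^`M(j) = (i == j)%:R.
Proof.
rewrite mderivX mnm1E; case: eqP => [->|_] /=.
  have -> : (U_(j) - U_(j))%MM = 0%MM by apply/mnmP=> k; rewrite mnmBE subnn mnm0E.
  by rewrite mpolyX0 scale1r.
by rewrite scale0r.
Qed.

Lemma mderiv_comp n k (R : comRingType) (lq : n.-tuple {mpoly R[k]})
  (p : {mpoly R[n]}) j :
  (p \mPo lq)^`M(j) = \sum_(i < n) (p^`M(i) \mPo lq) * (tnth lq i)^`M(j).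
Proof.
elim/mpoly_gen_ind: p.
- move=> c; rewrite comp_mpolyC mderivC big1 // => i _.
  by rewrite mderivC comp_mpoly0 mul0r.
- move=> i0; rewrite comp_mpolyXU -tnth_nth (bigD1 i0) //= dX eqxx.
  rewrite rmorph1 mul1r big1 ?addr0 // => i /negbTE.
  by rewrite dX eq_sym => ->; rewrite rmorph0 mul0r.
- move=> p q IHp IHq; rewrite raddfD mderivD IHp IHq -big_split /=.
  by apply: eq_bigr => i _; rewrite mderivD raddfD mulrDl.
- move=> p q IHp IHq; rewrite rmorphM mderivM IHp IHq mulr_suml mulr_sumr -big_split /=.
  apply: eq_bigr => i _; rewrite mderivM raddfD /= !(rmorphM (comp_mpoly lq)).
  ring.
Qed.

Lemma mderiv_map n (R S : comRingType) (f : {rmorphism R -> S}) (p : {mpoly R[n]}) j :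
  (map_mpoly f p)^`M(j) = map_mpoly f (p^`M(j)).
Proof.
elim/mpoly_gen_ind: p.
- by move=> c; rewrite map_mpolyC !mderivC rmorph0.
- by move=> i; rewrite map_mpolyX !dX rmorph_nat.
- by move=> p q IHp IHq; rewrite !raddfD /= ?mderivD IHp IHq ?raddfD.
- by move=> p q IHp IHq; rewrite !rmorphM /= !mderivM IHp IHq raddfD /= !rmorphM.
Qed.

Lemma comp_comp n k l (R : comRingType) (lq : n.-tuple {mpoly R[k]})
   (lr : k.-tuple {mpoly R[l]}) (p : {mpoly R[n]}) :
  (p \mPo lq) \mPo lr = p \mPo [tuple (tnth lq i) \mPo lr | i < n].
Proof.
elim/mpoly_gen_ind: p.
- by move=> c; rewrite !comp_mpolyC.
- by move=> i; rewrite !comp_mpolyXU -!tnth_nth tnth_map tnth_ord_tuple.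
- by move=> p q IHp IHq; rewrite !raddfD /= IHp IHq.
- by move=> p q IHp IHq; rewrite !rmorphM /= IHp IHq.
Qed.


Lemma inord_eq n i j : (i <= n)%N -> (j <= n)%N -> (@inord n i == inord j) = (i == j).
Proof.
move=> hi hj; apply/eqP/eqP => [h|->] //.
by rewrite -(inordK hi) h inordK.
Qed.

Lemma dXV n (R : comRingType) i j : (i <= n)%N -> (j <= n)%N ->
  (XV n i R)^`M(@inord n j) = (i == j)%:R.
Proof. by move=> hi hj; rewrite /XV dX inord_eq. Qed.

Set Implicit Arguments. Unset Strict Implicit.
Section Der.
Variables (k : nat) (R : comRingType) (u v : {mpoly R[k]}) (i j : 'I_k).
Definition Der (p : {mpoly R[k]}) := u * p^`M(i) + v * p^`M(j).

Lemma DerD p q : Der (p + q) = Der p + Der q.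
Proof. by rewrite /Der !mderivD; ring. Qed.
Lemma DerN p : Der (- p) = - Der p.
Proof. by rewrite /Der !mderivN; ring. Qed.
Lemma DerB p q : Der (p - q) = Der p - Der q.
Proof. by rewrite DerD DerN. Qed.
Lemma DerM p q : Der (p * q) = Der p * q + p * Der q.
Proof. by rewrite /Der !mderivM; ring. Qed.
Lemma DerMn p l : Der (p *+ l) = Der p *+ l.
Proof. by rewrite /Der !mderivMn mulrnAr mulrnAr mulrnDl. Qed.
Lemma DerC c : Der c%:MP = 0.
Proof. by rewrite /Der !mderivC !mulr0 addr0. Qed.
Lemma Der0 : Der 0 = 0.
Proof. by have := DerC 0; rewrite mpolyC0. Qed.
Lemma Der1 : Der 1 = 0.
Proof. by have := DerC 1; rewrite mpolyC1. Qed.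
Lemma Der_nat l : Der l%:R = 0.
Proof. by have := DerC l%:R; rewrite mpolyC_nat. Qed.
Lemma DerX p l : Der (p ^+ l.+1) = (p ^+ l * Der p) *+ l.+1.
Proof.
elim: l => [|l IH]; first by rewrite expr1 expr0 mul1r.
by rewrite exprS DerM IH mulrnAr mulrA -exprS [Der p * _]mulrC -mulrS.
Qed.
Lemma DerX0 p l : Der p = 0 -> Der (p ^+ l) = 0.
Proof. by case: l => [|l] h; rewrite ?expr0 ?Der1 // DerX h mulr0 mul0rn. Qed.
Lemma Der_sum m (F : 'I_m -> {mpoly R[k]}) :
  Der (\sum_(r < m) F r) = \sum_(r < m) Der (F r).
Proof.
elim: m F => [|m IH] F; first by rewrite !big_ord0 Der0.
by rewrite !big_ord_recr /= DerD IH.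
Qed.
End Der.
Unset Implicit Arguments. Set Strict Implicit.


Lemma aux5 (T : comRingType) (a b d e : T) n : a * b * (d * e *+ n) = e * (a *+ n * b * d).
Proof. rewrite -[d * e *+ n]mulr_natr -[a *+ n]mulr_natr; ring. Qed.

Lemma uniq_rep (R : idomainType) k (u v : {mpoly R[k]}) i j (P Q : {mpoly R[k]}) :
  (forall (x : {mpoly R[k]}) l, x *+ l.+1 = 0 -> x = 0) ->
  Der u v i j P = 0 -> Der u v i j Q != 0 -> P != 0 ->
  forall m (c : nat -> {mpoly R[k]}), (forall r, Der u v i j (c r) = 0) ->
  \sum_(r < m.+1) c r * P ^+ (m - r) * Q ^+ r = 0 ->
  forall r, (r <= m)%N -> c r = 0.
Proof.
move=> hchar hP hQ hP0 m; elim: m => [|m IH] c hc hs r hr.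
  move: hr; rewrite leqn0 => /eqP ->.
  by move: hs; rewrite big_ord_recl big_ord0 /= !expr0 !mulr1 addr0.
have key : \sum_(r < m.+1) (c r.+1 *+ r.+1) * P ^+ (m - r) * Q ^+ r = 0.
  have := congr1 (Der u v i j) hs; rewrite Der0 Der_sum big_ord_recl /=.
  rewrite !DerM hc (DerX0 _ hP) expr0 Der1 !mulr0 !mul0r !addr0 mul0r add0r.
  under eq_bigr => r1 _ do rewrite /bump leq0n add1n !DerM hc (DerX0 _ hP) DerX
      !mulr0 !mul0r !add0r subSS mul0r add0r.
  have -> : \sum_(r < m.+1) c r.+1 * P ^+ (m - r) * (Q ^+ r * Der u v i j Q *+ r.+1)
     = Der u v i j Q * \sum_(r < m.+1) (c r.+1 *+ r.+1) * P ^+ (m - r) * Q ^+ r.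
    rewrite mulr_sumr; apply: eq_bigr => r1 _.
    exact: aux5.
  by move/eqP; rewrite mulf_eq0 (negbTE hQ) /= => /eqP.
have hc' : forall r, (r <= m)%N -> c r.+1 = 0.
  move=> r0 hr0; apply: (hchar _ r0).
  apply: (IH (fun r => c r.+1 *+ r.+1)) => //.
  by move=> r1; rewrite DerMn hc mul0rn.
case: r hr => [|r] hr; last exact: hc'.
move: hs; rewrite big_ord_recl big1 ?addr0 /=; last first.
  by move=> r1 _; rewrite /bump leq0n add1n hc' ?mul0r // -ltnS.
rewrite expr0 mulr1 subn0 => /eqP; rewrite mulf_eq0 expf_eq0 (negbTE hP0) andbF orbF.
by move/eqP.
Qed.


Notation i6 k := (@inord 5 k).
Notation i4 k := (@inord 3 k).
Definition P6 := qform al6 be6.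
Definition Q6 := qform a6 b6.
Definition L6 := Der al6 be6 (i6 0) (i6 1).
Definition Ham := Der (P6^`M(i6 5)) (- P6^`M(i6 4)) (i6 4) (i6 5).
Definition L4 := Der (XV 3 2 int) (XV 3 3 int) (i4 0) (i4 1).
Definition lq6 : 4.-tuple {mpoly int[6]} := [tuple a6; b6; al6; be6].

Lemma emb6_der q j : (emb6 q)^`M(j) =
   (q^`M(i4 0) \mPo lq6) * a6^`M(j) + (q^`M(i4 1) \mPo lq6) * b6^`M(j)
 + (q^`M(i4 2) \mPo lq6) * al6^`M(j) + (q^`M(i4 3) \mPo lq6) * be6^`M(j).
Proof.
rewrite /emb6 mderiv_comp !big_ord_recl big_ord0 addr0 /= !(tnth_nth 0) /=.
have e3 : lift ord0 (lift ord0 (lift ord0 ord0)) = i4 3 :> 'I_4 by apply/val_inj; rewrite /= inordK.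
have e2 : lift ord0 (lift ord0 ord0) = i4 2 :> 'I_4 by apply/val_inj; rewrite /= inordK.
have e1 : lift ord0 ord0 = i4 1 :> 'I_4 by apply/val_inj; rewrite /= inordK.
have e0 : ord0 = i4 0 :> 'I_4 by apply/val_inj; rewrite /= inordK.
by rewrite e3 e2 e1 e0 !addrA.
Qed.

Lemma emb6_dxy q : (emb6 q)^`M(i6 4) = 0 /\ (emb6 q)^`M(i6 5) = 0.
Proof.
by split; rewrite emb6_der /a6 /b6 /al6 /be6 !dXV //= !mulr0 !addr0.
Qed.

Lemma Ham_emb q : Ham (emb6 q) = 0.
Proof. by rewrite /Ham /Der; case: (emb6_dxy q) => -> ->; rewrite !mulr0 addr0. Qed.

Lemma L6_emb q : L6 (emb6 q) = emb6 (L4 q).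
Proof.
rewrite /L6 /L4 /Der !emb6_der /a6 /b6 /al6 /be6 !dXV //= !mulr0 !addr0 !mulr1.
rewrite /emb6 raddfD /= !rmorphM /= /XV !comp_mpolyXU !inordK //=.
by rewrite add0r.
Qed.


Lemma L6XV k : (k <= 5)%N -> L6 (XV 5 k int) = al6 * (k == 0)%:R + be6 * (k == 1)%:R.
Proof. by move=> hk; rewrite /L6 /Der !dXV. Qed.

Lemma L6x : L6 x6 = 0. Proof. by rewrite /x6 L6XV //= !mulr0 addr0. Qed.
Lemma L6y : L6 y6 = 0. Proof. by rewrite /y6 L6XV //= !mulr0 addr0. Qed.
Lemma L6al : L6 al6 = 0. Proof. by rewrite /al6 L6XV //= !mulr0 addr0. Qed.
Lemma L6be : L6 be6 = 0. Proof. by rewrite /be6 L6XV //= !mulr0 addr0. Qed.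
Lemma L6a : L6 a6 = al6. Proof. by rewrite /a6 L6XV //= mulr0 addr0 mulr1. Qed.
Lemma L6b : L6 b6 = be6. Proof. by rewrite /b6 L6XV //= mulr0 add0r mulr1. Qed.

Lemma L6D : L6 (be6 * a6 - al6 * b6) = 0.
Proof. by rewrite /L6 DerB !DerM -!/L6 L6a L6b L6al L6be !mul0r !add0r mulrC subrr. Qed.

Lemma L6P : L6 P6 = 0.
Proof.
rewrite /P6 /qform /L6 !expr2 !DerD !DerM -!/L6 L6x L6y L6al L6be.
by rewrite !(mul0r, mulr0, add0r, addr0).
Qed.

Lemma L6Q : L6 Q6 = P6.
Proof.
rewrite /Q6 /P6 /qform /L6 !expr2 !DerD !DerM -!/L6 L6x L6y L6a L6b.
by rewrite !(mul0r, mulr0, add0r, addr0).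
Qed.

Lemma HamP : Ham P6 = 0.
Proof. by rewrite /Ham /Der mulNr [P6^`M(i6 5) * _]mulrC subrr. Qed.

Definition ev (s : seq int) (i : 'I_6) : int := nth 0 s i.
Lemma mevalXV s k : (k <= 5)%N -> meval (ev s) (XV 5 k int) = nth 0 s k.
Proof. by move=> hk; rewrite /XV mevalXU /ev inordK. Qed.

Lemma P6_neq0 : P6 != 0.
Proof.
apply/negP => /eqP /(congr1 (meval (ev [:: 0; 0; 1; 0; 1; 0]))).
rewrite /P6 /qform /al6 /be6 /x6 /y6 !(mevalD, mevalM, rmorphXn) !mevalXV // meval0 /=.
all: by [].
Qed.

Lemma HamQ_neq0 : Ham Q6 != 0.
Proof.
apply/negP => /eqP /(congr1 (meval (ev [:: 1; 0; 0; 1; 1; 0]))).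
rewrite /Ham /Der /P6 /Q6 /qform /a6 /b6 /al6 /be6 /x6 /y6 !expr2.
rewrite !(mderivD, mderivM, mderivN) !dXV //=.
rewrite !(mevalD, mevalM, mevalN, rmorph_nat) !mevalXV // meval0 /=.
all: by [].
Qed.

Lemma S1_neq0 k : (x6 + y6) ^+ k != 0.
Proof.
apply/negP => /eqP /(congr1 (meval (ev [:: 0; 0; 0; 0; 1; 0]))).
rewrite /x6 /y6 rmorphXn /= mevalD !mevalXV // meval0 /= addr0 expr1n.
all: by [].
Qed.

Lemma S2_neq0 k : (x6 - y6) * (x6 + y6) ^+ k != 0.
Proof.
apply/negP => /eqP /(congr1 (meval (ev [:: 0; 0; 0; 0; 1; 0]))).
rewrite /x6 /y6 mevalM rmorphXn /= !mevalD mevalN !mevalXV // meval0 /= oppr0 !addr0 expr1n mul1r.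
all: by [].
Qed.

Lemma char6 (x : {mpoly int[6]}) l : x *+ l.+1 = 0 -> x = 0.
Proof.
move/eqP; rewrite -mulr_natr mulf_eq0 -mpolyC_nat mpolyC_eq0 Num.Theory.pnatr_eq0 orbF.
by move/eqP.
Qed.

Definition lr4 : 6.-tuple {mpoly int[4]} :=
  [tuple 'X_(i4 0); 'X_(i4 1); 'X_(i4 2); 'X_(i4 3); 0; 0].

Lemma emb6K p : emb6 p \mPo lr4 = p.
Proof.
rewrite /emb6 comp_comp -[RHS]comp_mpoly_id; congr comp_mpoly.
apply: eq_from_tnth => i; rewrite tnth_map tnth_ord_tuple tnth_mktuple.
case: i => [[|[|[|[|//]]]] hi]; rewrite (tnth_nth 0) /= /a6 /b6 /al6 /be6 /XV comp_mpolyXU inordK //=;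
  by congr 'X_(_); apply/val_inj; rewrite /= inordK.
Qed.

Lemma emb6_inj : injective emb6.
Proof. by move=> p q h; rewrite -(emb6K p) -(emb6K q) h. Qed.


Lemma aux6 (T : comRingType) (a b d e : T) n : a * b * (d * e *+ n) = a *+ n * (e * b) * d.
Proof. rewrite -[d * e *+ n]mulr_natr -[a *+ n]mulr_natr; ring. Qed.

Lemma emb0 : emb6 0 = 0. Proof. by rewrite /emb6 comp_mpoly0. Qed.

Lemma second_sum m (Psi : nat -> {mpoly int[4]}) :
  \sum_(r < m.+1) emb6 (Psi r) * P6 ^+ (m - r) * L6 (Q6 ^+ r) =
  \sum_(r < m.+1) emb6 (Psi r.+1 *+ r.+1 * ((r < m)%N)%:R) * P6 ^+ (m - r) * Q6 ^+ r.
Proof.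
rewrite big_ord_recl big_ord_recr /= expr0 /L6 Der1 mulr0 add0r ltnn mulr0.
rewrite emb0 !mul0r addr0.
apply: eq_bigr => -[r hr] _; rewrite /bump leq0n add1n /= hr mulr1 DerX -/L6 L6Q.
rewrite /emb6 comp_mpolyMn.
have -> : (m - r = (m - r.+1).+1)%N by rewrite subnSK.
by rewrite exprS aux6.
Qed.

Lemma L6_sum m (Psi : nat -> {mpoly int[4]}) :
  L6 (\sum_(r < m.+1) emb6 (Psi r) * P6 ^+ (m - r) * Q6 ^+ r) =
  \sum_(r < m.+1) emb6 (L4 (Psi r) + Psi r.+1 *+ r.+1 * ((r < m)%N)%:R)
       * P6 ^+ (m - r) * Q6 ^+ r.
Proof.
rewrite /L6 Der_sum -/L6.
transitivity (\sum_(r < m.+1) emb6 (L4 (Psi r)) * P6 ^+ (m - r) * Q6 ^+ r +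
  \sum_(r < m.+1) emb6 (Psi r) * P6 ^+ (m - r) * L6 (Q6 ^+ r)).
  rewrite -big_split; apply: eq_bigr => r _.
  rewrite /L6 !DerM -/L6 L6_emb (fun k => DerX0 k L6P : L6 (P6 ^+ k) = 0) mulr0 addr0.
  by [].
transitivity (\sum_(r < m.+1) emb6 (L4 (Psi r)) * P6 ^+ (m - r) * Q6 ^+ r +
  \sum_(r < m.+1) emb6 (Psi r.+1 *+ r.+1 * ((r < m)%N)%:R) * P6 ^+ (m - r) * Q6 ^+ r).
  by congr (_ + _); exact: second_sum.
rewrite -big_split; apply: eq_bigr => r _.
by rewrite /emb6 (comp_mpolyD _ (L4 (Psi r))) !mulrDl.
Qed.

Lemma main_rel m (S G : {mpoly int[6]}) (Psi : nat -> {mpoly int[4]}) :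
  S != 0 -> L6 S = 0 -> L6 G = 0 ->
  G = S * \sum_(r < m.+1) emb6 (Psi r) * P6 ^+ (m - r) * Q6 ^+ r ->
  forall r, (1 <= r <= m)%N -> Psi r *+ r = - L4 (Psi r.-1).
Proof.
move=> hS hLS hLG hG.
have hT := congr1 L6 hG.
rewrite hLG /L6 DerM -/L6 hLS mul0r add0r L6_sum in hT.
move/esym/eqP: hT; rewrite mulf_eq0 (negbTE hS) /= => /eqP hT.
set d := fun r => L4 (Psi r) + Psi r.+1 *+ r.+1 * ((r < m)%N)%:R.
have hd : forall r, (r <= m)%N -> d r = 0.
  move=> r hr; apply: emb6_inj; rewrite emb0.
  exact: (@uniq_rep _ _ _ _ _ _ _ _ char6 HamP HamQ_neq0 P6_neq0 m (fun r => emb6 (d r)) (fun r => Ham_emb (d r)) hT r hr).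
move=> [|r] // /andP [_ hr].
have := hd r (ltnW hr); rewrite /d hr mulr1 => /eqP; rewrite addrC addr_eq0 => /eqP.
by [].
Qed.


Definition lq5 : 4.-tuple {mpoly int[5]} := [tuple a5 - al5 * th5; b5 - be5 * th5; al5; be5].

Lemma comp_der p :
  (p \mPo lq5)^`M(theta_idx) = (- L4 p) \mPo lq5.
Proof.
rewrite mderiv_comp !big_ord_recl big_ord0 addr0 /= !(tnth_nth 0) /=.
have e3 : lift ord0 (lift ord0 (lift ord0 ord0)) = i4 3 :> 'I_4 by apply/val_inj; rewrite /= inordK.
have e2 : lift ord0 (lift ord0 ord0) = i4 2 :> 'I_4 by apply/val_inj; rewrite /= inordK.
have e1 : lift ord0 ord0 = i4 1 :> 'I_4 by apply/val_inj; rewrite /= inordK.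
have e0 : ord0 = i4 0 :> 'I_4 by apply/val_inj; rewrite /= inordK.
rewrite e3 e2 e1 e0 /theta_idx /a5 /b5 /al5 /be5 /th5.
rewrite !(mderivB, mderivM) !dXV //= /L4 /Der.
rewrite (comp_mpolyN lq5 (_ + _)) (comp_mpolyD lq5) !(rmorphM (comp_mpoly lq5)) /= /XV !comp_mpolyXU !inordK //=.
rewrite /al5 /be5 /XV; ring.
Qed.

Lemma subst_der p :
  (subst_theta p)^`M(theta_idx) = subst_theta (- L4 p).
Proof. by rewrite /subst_theta mderiv_map -/lq5 comp_der. Qed.


Lemma final_step (X : nat -> {mpoly int[4]}) r : (0 < r)%N ->
  X r *+ r = - L4 (X r.-1) ->
  subst_theta (X r) = - (r%:R)^-1 *: (- (subst_theta (X r.-1))^`M(theta_idx)).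
Proof.
move=> hr h; rewrite subst_der -h /subst_theta comp_mpolyMn rmorphMn /=.
rewrite scaleNr scalerN opprK -scaler_nat scalerA mulVf ?scale1r //.
by rewrite Num.Theory.pnatr_eq0 -lt0n.
Qed.

Lemma L6S1 k : L6 ((x6 + y6) ^+ k) = 0.
Proof. by apply: DerX0; rewrite DerD -/L6 L6x L6y addr0. Qed.

Lemma L6S2 k : L6 ((x6 - y6) * (x6 + y6) ^+ k) = 0.
Proof.
rewrite /L6 DerM -/L6 L6S1 mulr0 addr0 /L6 DerB -/L6 L6x L6y subr0 mul0r.
by [].
Qed.

Lemma L6G1 m n : L6 ((be6 * a6 - al6 * b6) ^+ m * (x6 ^+ n + y6 ^+ n)) = 0.
Proof.
rewrite /L6 DerM DerD (DerX0 _ L6D) (DerX0 _ L6x) (DerX0 _ L6y).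
by rewrite mul0r add0r addr0 mulr0.
Qed.

Lemma L6G2 m n : L6 ((be6 * a6 - al6 * b6) ^+ m * (x6 ^+ n - y6 ^+ n)) = 0.
Proof.
rewrite /L6 DerM DerB (DerX0 _ L6D) (DerX0 _ L6x) (DerX0 _ L6y).
by rewrite mul0r add0r subr0 mulr0.
Qed.

Theorem corollary8p3 (n : nat) (hn : (1 <= n)%N)
    (Psi Phi : nat -> {mpoly int[4]}) :
  (IsPsi n Psi ->
   forall r : nat, (1 <= r <= n./2)%N ->
     subst_theta (Psi r)
     = - (r%:R)^-1 *: (- (subst_theta (Psi r.-1))^`M(theta_idx)))
  /\
  (IsPhi n Phi ->
   forall r : nat, (1 <= r <= (n.-1)./2)%N ->
     subst_theta (Phi r)
     = - (r%:R)^-1 *: (- (subst_theta (Phi r.-1))^`M(theta_idx))).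
Proof.
split.
- move=> h r hr; apply: final_step; first by case/andP: hr.
  exact: (@main_rel (n./2) ((x6 + y6) ^+ odd n)
    ((be6 * a6 - al6 * b6) ^+ (n./2) * (x6 ^+ n + y6 ^+ n)) Psi
    (S1_neq0 _) (L6S1 _) (L6G1 _ _) h r hr).
- move=> h r hr; apply: final_step; first by case/andP: hr.
  exact: (@main_rel ((n.-1)./2) ((x6 - y6) * (x6 + y6) ^+ odd n.-1)
    ((be6 * a6 - al6 * b6) ^+ ((n.-1)./2) * (x6 ^+ n - y6 ^+ n)) Phi
    (S2_neq0 _) (L6S2 _) (L6G2 _ _) h r hr).
Qed.
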